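(* Consider the job set $J$ described in the context, with $p_\ell$ sufficiently large. Let $\sigma=(M_1,M_2)$ be a schedule of $J$ with $\omega_1(\sigma)=0$ and $\ell\in M_1$. Then $\sigma$ can be improved (its makespan strictly decreased) by the 3-swap that interchanges $a_1$ with $b_1,c_1$, making $\omega_1=1$.
   Context: Two identical machines; a schedule $\sigma=(M_1,M_2)$ partitions the jobs into sets processed on machines 1 and 2, with loads $L_i=\sum_{j\in M_i}p_j$ and makespan $\max_iL_i$. Fix $n\ge1$ and the job set $J=\{a_i,b_i,c_i:1\le i\le n\}\cup\{\ell\}$ with $p_{a_i}=2^{n+i+1}+2^{i-1}$, $p_{b_i}=2^{n+i}$, $p_{c_i}=2^{n+i-1}+2^{i-1}$, and $p_\ell$ a sufficiently large number. For each $i$ define $\omega_i(\sigma)=0$ if $a_i\in M_1$ and $b_i,c_i\in M_2$; $\omega_i(\sigma)=1$ if $a_i\in M_2$ and $b_i,c_i\in M_1$; and $\omega_i(\sigma)=-1$ otherwise. A 3-swap interchanges the machine assignments of exactly three jobs (some on each machine); it improves $\sigma$ if the makespan strictly decreases. *)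

(* Defs.v *)
From mathcomp Require Import all_boot all_algebra.
Set Implicit Arguments. Unset Strict Implicit. Unset Printing Implicit Defensive.

(* Jobs: a_i, b_i, c_i (i : 'I_n, paper index i+1) and the long job l. *)
Definition job (n : nat) : finType := ('I_n + 'I_n + 'I_n + unit)%type.
Definition ja {n} (i : 'I_n) : job n := inl (inl (inl i)).
Definition jb {n} (i : 'I_n) : job n := inl (inl (inr i)).
Definition jc {n} (i : 'I_n) : job n := inl (inr i).
Definition jl {n} : job n := inr tt.

Definition ptime (n pl : nat) (j : job n) : nat :=
  match j with
  | inl (inl (inl i)) => let k := (i : nat).+1 in 2 ^ (n + k + 1) + 2 ^ (k - 1)
  | inl (inl (inr i)) => let k := (i : nat).+1 in 2 ^ (n + k)
  | inl (inr i)       => let k := (i : nat).+1 in 2 ^ (n + k - 1) + 2 ^ (k - 1)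
  | inr _             => pl
  end.

(* A schedule assigns each job to machine 1 (true) or machine 2 (false). *)
Definition schedule (n : nat) := job n -> bool.

Definition onM1 {n} (s : schedule n) (j : job n) : bool := s j.
Definition onM2 {n} (s : schedule n) (j : job n) : bool := ~~ s j.

Definition load1 (n pl : nat) (s : schedule n) : nat :=
  \sum_(j : job n | onM1 s j) ptime pl j.
Definition load2 (n pl : nat) (s : schedule n) : nat :=
  \sum_(j : job n | onM2 s j) ptime pl j.
Definition makespan (n pl : nat) (s : schedule n) : nat :=
  maxn (load1 pl s) (load2 pl s).

Definition omega {n} (s : schedule n) (i : 'I_n) : int :=
  if [&& onM1 s (ja i), onM2 s (jb i) & onM2 s (jc i)] then Posz 0
  else if [&& onM2 s (ja i), onM1 s (jb i) & onM1 s (jc i)] then Posz 1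
  else Negz 0.

Definition swap {n} (s : schedule n) (S : pred (job n)) : schedule n :=
  fun j => if S j then ~~ s j else s j.

Definition swap3 {n} (s : schedule n) (i : 'I_n) : schedule n :=
  swap s (fun j => (j == ja i) || (j == jb i) || (j == jc i)).

Definition improves (n pl : nat) (s s' : schedule n) : Prop :=
  makespan pl s' < makespan pl s.

(* Main.v *)
Require Import Defs.
From mathcomp Require Import all_boot all_algebra.
From mathcomp Require Import zify.

Lemma sum_ind {T : finType} (x : T) (c : nat) :
  \sum_(j : T) ((j == x) * c) = c.
Proof.
rewrite (bigD1 x) //= eqxx mul1n big1 ?addn0 // => j /negbTE ->; by [].
Qed.

Lemma load1E n pl (s : schedule n) :
  load1 pl s = \sum_j (if s j then ptime pl j else 0).
Proof. by rewrite /load1 big_mkcond. Qed.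

Lemma load2E n pl (s : schedule n) :
  load2 pl s = \sum_j (if ~~ s j then ptime pl j else 0).
Proof. by rewrite /load2 big_mkcond. Qed.

Theorem lemma7 (n : nat) (hn : 0 < n) :
  exists P : nat, forall pl : nat, P <= pl ->
  forall s : schedule n,
    omega s (Ordinal hn) = Posz 0 -> onM1 s jl ->
    improves pl s (swap3 s (Ordinal hn)) /\
    omega (swap3 s (Ordinal hn)) (Ordinal hn) = Posz 1.
Proof.
set i := Ordinal hn.
set T := \sum_(j : job n) ptime 0 j.
exists (T + 2 ^ n * 4 + 2) => pl HP s Hom Hl. rewrite /onM1 in Hl.
have [sa sb sc] : [/\ s (ja i) = true, s (jb i) = false & s (jc i) = false].
  move: Hom; rewrite /omega /onM1 /onM2.
  by case: (s (ja i)); case: (s (jb i)); case: (s (jc i)).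
set s' := swap3 s i.
have s'a : s' (ja i) = false by rewrite /s' /swap3 /swap eqxx /= sa.
have s'b : s' (jb i) = true by rewrite /s' /swap3 /swap eqxx orbT /= sb.
have s'c : s' (jc i) = true by rewrite /s' /swap3 /swap eqxx orbT /= sc.
have s'o : forall j, j != ja i -> j != jb i -> j != jc i -> s' j = s j.
  move=> j h1 h2 h3; by rewrite /s' /swap3 /swap (negbTE h1) (negbTE h2) (negbTE h3).
have pa : ptime pl (ja i) = 2 ^ n * 4 + 1.
  rewrite /=. have -> : 2 ^ (n + 1 + 1) = 2 ^ n * 4 by rewrite -addnA expnD.
  by [].
have pb : ptime pl (jb i) = 2 ^ n * 2.
  by rewrite /= expnD.
have pc : ptime pl (jc i) = 2 ^ n + 1.
  by rewrite /= addnK.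
have dab : (ja i == jb i) = false by [].
have dac : (ja i == jc i) = false by [].
have dbc : (jb i == jc i) = false by [].
have dba : (jb i == ja i) = false by [].
have dca : (jc i == ja i) = false by [].
have dcb : (jc i == jb i) = false by [].
have dla : (jl == ja i) = false by [].
have dal : (ja i == jl) = false by [].
have K1 : load1 pl s + ptime pl (jb i) + ptime pl (jc i)
          = load1 pl s' + ptime pl (ja i).
  rewrite !load1E -(sum_ind (jb i) (ptime pl (jb i))) -(sum_ind (jc i) (ptime pl (jc i))) -(sum_ind (ja i) (ptime pl (ja i))).
  rewrite -!big_split; apply: eq_bigr => j _.
  case: (eqVneq j (ja i)) => [->|h1]; first by rewrite ?sa ?s'a ?sb ?s'b ?sc ?s'c ?dab ?dac ?dba ?dbc ?dca ?dcb; move: (ptime pl (ja i)) (ptime pl (jb i)) (ptime pl (jc i)) => x y z /=; rewrite ?mul0n ?mul1n ?addn0 ?add0n.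
  case: (eqVneq j (jb i)) => [->|h2]; first by rewrite ?sa ?s'a ?sb ?s'b ?sc ?s'c ?dab ?dac ?dba ?dbc ?dca ?dcb; move: (ptime pl (ja i)) (ptime pl (jb i)) (ptime pl (jc i)) => x y z /=; rewrite ?mul0n ?mul1n ?addn0 ?add0n.
  case: (eqVneq j (jc i)) => [->|h3]; first by rewrite ?sa ?s'a ?sb ?s'b ?sc ?s'c ?dab ?dac ?dba ?dbc ?dca ?dcb; move: (ptime pl (ja i)) (ptime pl (jb i)) (ptime pl (jc i)) => x y z /=; rewrite ?mul0n ?mul1n ?addn0 ?add0n.
  by rewrite s'o //= ?mul0n ?addn0.
have K2 : load2 pl s + ptime pl (ja i)
          = load2 pl s' + ptime pl (jb i) + ptime pl (jc i).
  rewrite !load2E -(sum_ind (jb i) (ptime pl (jb i))) -(sum_ind (jc i) (ptime pl (jc i))) -(sum_ind (ja i) (ptime pl (ja i))).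
  rewrite -!big_split; apply: eq_bigr => j _.
  case: (eqVneq j (ja i)) => [->|h1]; first by rewrite ?sa ?s'a ?sb ?s'b ?sc ?s'c ?dab ?dac ?dba ?dbc ?dca ?dcb; move: (ptime pl (ja i)) (ptime pl (jb i)) (ptime pl (jc i)) => x y z /=; rewrite ?mul0n ?mul1n ?addn0 ?add0n.
  case: (eqVneq j (jb i)) => [->|h2]; first by rewrite ?sa ?s'a ?sb ?s'b ?sc ?s'c ?dab ?dac ?dba ?dbc ?dca ?dcb; move: (ptime pl (ja i)) (ptime pl (jb i)) (ptime pl (jc i)) => x y z /=; rewrite ?mul0n ?mul1n ?addn0 ?add0n.
  case: (eqVneq j (jc i)) => [->|h3]; first by rewrite ?sa ?s'a ?sb ?s'b ?sc ?s'c ?dab ?dac ?dba ?dbc ?dca ?dcb; move: (ptime pl (ja i)) (ptime pl (jb i)) (ptime pl (jc i)) => x y z /=; rewrite ?mul0n ?mul1n ?addn0 ?add0n.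
  by rewrite s'o //= ?mul0n ?addn0.
have K3 : load1 pl s + load2 pl s = T + pl.
  rewrite load1E load2E -big_split /T -[X in _ = _ + X](sum_ind (@jl n) pl) -big_split /=.
  apply: eq_bigr => j _.
  case: (eqVneq j jl) => [->|h]; first by rewrite Hl /= addn0 add0n mul1n.
  rewrite /= mul0n addn0 (_ : ptime pl j = ptime 0 j); last by case: j h => [[[x|x]|x]|[]].
  by case: (s j); rewrite /= ?addn0.
have K4 : pl + ptime pl (ja i) <= load1 pl s.
  rewrite load1E -[X in X + _ <= _](sum_ind (@jl n) pl) -(sum_ind (ja i) (ptime pl (ja i))) -big_split /=.
  apply: leq_sum => j _.
  case: (eqVneq j jl) => [->|h]; first by rewrite Hl dla /= mul1n mul0n addn0.
  case: (eqVneq j (ja i)) => [->|h']; first by rewrite sa /= mul0n mul1n add0n.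
  by [].
split.
  rewrite /improves /makespan -/s'.
  rewrite pa pb pc in K1 K2 K4.
  have hp : 0 < 2 ^ n by rewrite expn_gt0.
  move: K1 K2 K3 K4 HP hp.
  move: (load1 pl s) (load2 pl s) (load1 pl s') (load2 pl s') (2 ^ n) T => a b c d e t.
  clear. lia.
rewrite /omega /onM1 /onM2 -/s' s'a s'b s'c.
by [].
Qed.
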